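(* Let $\mathcal I=\mathbb R^d$ with the standard inner product, let $\mathcal G$ be a compact Abelian group with normalized Haar measure $dg$, acting on $\mathcal I$ by a unitary representation $I\mapsto gI$. Let $\mathcal T=\mathcal S$ be the unit sphere of $\mathcal I$. For $I\in\mathcal I$ let $\rho_I$ be the law of the random variable $g\mapsto gI$ on $(\mathcal G,dg)$, i.e. $\rho_I(A)=\int_{\{g:\,gI\in A\}}dg$. For $t\in\mathcal T$ and a probability measure $\rho$ on $\mathcal I$, let $\rho^t$ be the probability measure on $\mathbb R$ given by $\rho^t(B)=\rho(\pi_t^{-1}(B))$, where $\pi_t(I)=\langle I,t\rangle$. Define the Tomographic Probabilistic representation $\Psi$, mapping each $I\in\mathcal I$ to the function $\mathcal T\to\mathcal P(\mathbb R)$ given by $\Psi(I)(t)=(\rho_I)^t$. Then for all $I,I'\in\mathcal I$, $$I\sim I'\iff \Psi(I)=\Psi(I').$$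
   Context: $\mathcal P(\mathbb R)$ denotes the set of Borel probability measures on $\mathbb R$. $I\sim I'$ means there exists $g\in\mathcal G$ with $gI=I'$. *)

(* Defs.v *)
From HB Require Import structures.
From mathcomp Require Import all_boot all_order all_algebra.
From mathcomp Require Import all_classical all_reals all_analysis.
Set Implicit Arguments. Unset Strict Implicit. Unset Printing Implicit Defensive.
Import Order.TTheory GRing.Theory Num.Theory.
Import numFieldNormedType.Exports.
Local Open Scope classical_set_scope.
Local Open Scope ring_scope.

(* G viewed as a pointed type (base point 0), needed to form its Borel
   sigma-algebra with the library's g_sigma_algebraType *)
Definition zpt (G : topologicalZmodType) : Type := G.
HB.instance Definition _ (G : topologicalZmodType) := Choice.on (zpt G).
HB.instance Definition _ (G : topologicalZmodType) :=
  isPointed.Build (zpt G) (0%R : G).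
Notation borelType G := (@g_sigma_algebraType (zpt G) (@open G)).

Definition inner (R : realType) (d : nat) (x y : 'cV[R]_d) : R :=
  \sum_(i < d) x i 0 * y i 0.

Definition sphere (R : realType) (d : nat) : set 'cV[R]_d :=
  [set t | inner t t = 1].

Definition unitary_rep (R : realType) (d : nat) (G : topologicalZmodType)
    (rep : G -> 'M[R]_d) : Prop :=
  [/\ rep 0 = 1%:M,
      (forall g h, rep (g + h) = rep g *m rep h),
      (forall g, (rep g)^T *m rep g = 1%:M) &
      (forall i j, continuous (fun g => rep g i j))].

(* normalized Haar measure on a compact (Hausdorff) abelian group G:
   a translation-invariant Radon probability measure on the Borel sets of G *)
Definition haar_prob (R : realType) (G : topologicalZmodType)
    (mu : probability (borelType G) R) : Prop :=
  [/\ (forall (g : G) (A : set (borelType G)), measurable A ->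
         mu ((fun h : G => g + h) @^-1` A) = mu A),
      (forall U : set (borelType G), open (U : set G) ->
         mu U = ereal_sup [set mu K | K in [set K : set (borelType G) |
                                         compact (K : set G) /\ K `<=` U]]) &
      (forall A : set (borelType G), measurable A ->
         mu A = ereal_inf [set mu U | U in [set U : set (borelType G) |
                                         open (U : set G) /\ A `<=` U]])].

Definition rho (R : realType) (d : nat) (G : topologicalZmodType)
    (mu : probability (borelType G) R) (rep : G -> 'M[R]_d) (I : 'cV[R]_d)
    : set 'cV[R]_d -> \bar R :=
  fun A => mu ((fun g : borelType G => rep g *m I) @^-1` A).

Definition proj (R : realType) (d : nat) (rh : set 'cV[R]_d -> \bar R)
    (t : 'cV[R]_d) : set R -> \bar R :=
  fun B => rh ((fun I => inner I t) @^-1` B).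

Definition Psi (R : realType) (d : nat) (G : topologicalZmodType)
    (mu : probability (borelType G) R) (rep : G -> 'M[R]_d) (I : 'cV[R]_d)
    : 'cV[R]_d -> set R -> \bar R :=
  fun t => proj (rho mu rep I) t.

(* Psi(I) = Psi(I') as maps T -> P(R): equal on every t in the sphere,
   as (Borel probability) measures, i.e. on every Borel set of R *)
Definition Psi_eq (R : realType) (d : nat) (G : topologicalZmodType)
    (mu : probability (borelType G) R) (rep : G -> 'M[R]_d) (I I' : 'cV[R]_d)
    : Prop :=
  forall t, sphere t -> forall B : set R, measurable B ->
    Psi mu rep I t B = Psi mu rep I' t B.

Definition orbit_equiv (R : realType) (d : nat) (G : Type)
    (rep : G -> 'M[R]_d) (I I' : 'cV[R]_d) : Prop :=
  exists g, rep g *m I = I'.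

(* Main.v *)
Require Import Defs.
From HB Require Import structures.
From mathcomp Require Import all_boot all_order all_algebra.
From mathcomp Require Import all_classical all_reals all_analysis.
From mathcomp Require Import ring lra measurable_realfun finmap.
Import Order.TTheory GRing.Theory Num.Theory.
Import numFieldNormedType.Exports.
Local Open Scope classical_set_scope.
Local Open Scope ring_scope.

Section Lin.
Variables (R : realType) (d : nat).
Implicit Types x y : 'cV[R]_d.

Lemma innerE x y : inner x y = (x^T *m y) 0 0.
Proof. by rewrite /inner mxE; apply: eq_bigr => i _; rewrite mxE. Qed.

Lemma inner_rep (M : 'M[R]_d) x y : M^T *m M = 1%:M ->
  inner (M *m x) (M *m y) = inner x y.
Proof. by move=> HM; rewrite !innerE trmx_mul -mulmxA (mulmxA M^T) HM mul1mx. Qed.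

Lemma innerC x y : inner x y = inner y x.
Proof. by rewrite /inner; apply: eq_bigr => i _; rewrite mulrC. Qed.

Lemma innerZr a x y : inner x (a *: y) = a * inner x y.
Proof. by rewrite /inner mulr_sumr; apply: eq_bigr => i _; rewrite mxE mulrCA. Qed.

Lemma inner_ge0 x : 0 <= inner x x.
Proof. by apply: sumr_ge0 => i _; rewrite -expr2 sqr_ge0. Qed.

Lemma inner_eq0 x : inner x x = 0 -> x = 0.
Proof.
move=> /psumr_eq0P H; have {}H := H (fun i _ => ltac:(by rewrite -expr2 sqr_ge0)); apply/matrixP => i j; rewrite (ord1 j) mxE.
have /eqP := H i isT .
by rewrite -expr2 sqrf_eq0 => /eqP.
Qed.

Lemma innerB x y : inner (x - y) (x - y) = inner x x - 2 * inner x y + inner y y.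
Proof.
rewrite /inner mulr_sumr -sumrB -big_split /=; apply: eq_bigr => i _.
rewrite !mxE; ring.
Qed.
Lemma inner0 x : inner 0 x = 0.
Proof. by rewrite /inner big1 // => i _; rewrite mxE mul0r. Qed.
End Lin.
Arguments inner_ge0 {R d}. Arguments inner_rep {R d}. Arguments inner_eq0 {R d}.

HB.instance Definition _ (G : topologicalZmodType) := Topological.copy (zpt G) G.

Section Top.
Variables (R : realType) (G : topologicalZmodType).

Lemma cont_sum n (F : 'I_n -> G -> R) :
  (forall i, continuous (F i)) -> continuous (fun g => \sum_(i < n) F i g).
Proof.
elim: n F => [|n IH] F HF.
  under eq_fun do rewrite big_ord0; exact: cst_continuous.
under eq_fun do rewrite big_ord_recr /=.
move=> x; apply: (@continuousD _ R^o G (fun g => \sum_(i < n) F (widen_ord (leqnSn n) i) g) (F ord_max)).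
  exact: (IH (fun i => F (widen_ord (leqnSn n) i))).
exact: HF.
Qed.

Lemma cont_mul (f g : G -> R) : continuous f -> continuous g ->
  continuous (fun x => f x * g x).
Proof. by move=> cf cg x; apply: continuousM; [exact: cf|exact: cg]. Qed.

Lemma cont_entry d (rep : G -> 'M[R]_d) (x : 'cV[R]_d) i :
  (forall i j, continuous (fun g => rep g i j)) ->
  continuous (fun g => (rep g *m x) i 0).
Proof.
move=> H; under eq_fun do rewrite mxE.
apply: cont_sum => j; apply: cont_mul => //; exact: cst_continuous.
Qed.

Lemma cont_inner d (u v : G -> 'cV[R]_d) :
  (forall i, continuous (fun g => u g i 0)) ->
  (forall i, continuous (fun g => v g i 0)) ->
  continuous (fun g => inner (u g) (v g)).
Proof. by move=> Hu Hv; apply: cont_sum => i; apply: cont_mul. Qed.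

Lemma open_mble (U : set G) : open U -> measurable (U : set (borelType G)).
Proof. by move=> oU; apply: sub_sigma_algebra. Qed.

Lemma cont_mble (f : G -> R) : continuous f ->
  forall B : set R, measurable B -> measurable ((f @^-1` B) : set (borelType G)).
Proof.
move=> cf B mB.
have mf : measurable_fun (setT : set (borelType G)) (f : borelType G -> R).
  apply: (measurability _ (RGenOpens.measurableE R)).
  move=> _ [_ [a [b ->] <-]]; rewrite setTI; apply: open_mble.
  by move/continuousP : cf; apply; exact: interval_open.
by have := mf measurableT B mB; rewrite setTI.
Qed.

Lemma cont_transl (c : G) : continuous (fun x : G => c + x).
Proof.
move=> x; apply: (@continuous_comp _ _ _ (fun x => (c, x)) (fun x : G * G => x.1 + x.2)).
  by apply: cvg_pair => /=; [exact: cvg_cst|exact: cvg_id].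
exact: add_continuous.
Qed.

Variable mu : probability (borelType G) R.
Hypothesis cG : compact [set: G].
Hypothesis Hinv : forall (g : G) (A : set (borelType G)), measurable A ->
         mu ((fun h : G => g + h) @^-1` A) = mu A.

Lemma open_pos (U : set G) : open U -> U 0 -> mu U != 0%E.
Proof.
move=> oU U0; apply/eqP => mU0.
have cc : cover_compact [set: G].
  have c' : compact [set: zpt G] := cG. by rewrite (compact_cover (zpt G)) in c'.
move: cc => /(_ G setT (fun h => (fun x => -h + x) @^-1` U)).
case.
- by move=> h _; move/continuousP: (cont_transl (-h)); apply.
- by move=> x _; exists x => //=; rewrite addNr.
move=> D' _ cov.
have mU : measurable (U : set (borelType G)) by exact: open_mble.
have hm : forall i, [set` D'] i -> measurable (((fun x => -i + x) @^-1` U) : set (borelType G)).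
  by move=> i _; apply: open_mble; move/continuousP: (cont_transl (-i)); apply.
have := @content_sub_fsum _ _ _ mu _ [set` D'] setT (fun h => (fun x => -h + x) @^-1` U)
  (finite_fset D') hm measurableT cov.
move=> H.
have E : mu [set: borelType G] = 1%E := probability_setT mu.
have E0 : (\sum_(i \in [set` D']) mu ((fun x => -i + x) @^-1` U))%R = 0%E.
  by apply: fsbig1 => i _; rewrite Hinv.
have : (1 <= 0 :> \bar R)%E; last by rewrite lee_fin ler10.
by rewrite -{1}E -E0; exact: H.
Qed.

Lemma attain (f : G -> R) : continuous f ->
  (forall e, 0 < e -> exists g, f g < e) -> exists g, f g <= 0.
Proof.
move=> cf H.
case: (pselect (exists g, f g <= 0)) => // /forallNP Hn; exfalso.
have fpos g : 0 < f g by rewrite ltNge; apply/negP; exact: Hn.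
have cc : cover_compact [set: G].
  have c' : compact [set: zpt G] := cG. by rewrite (compact_cover (zpt G)) in c'.
have := cc nat setT (fun n : nat => f @^-1` [set x | x > n.+1%:R^-1]).
case.
- by move=> n _; move/continuousP: cf; apply; exact: open_gt.
- move=> x _; exists (Num.trunc (f x)^-1) => //=.
  have hx := fpos x.
  rewrite -[X in _ < X](invrK (f x)) ltf_pV2 ?posrE ?invr_gt0 ?ltr0n //.
  exact: truncnS_gt.
move=> D' _ cov.
set N := (\max_(i <- D') i)%N.
have [g hg] := H (N.+1%:R^-1) ltac:(by rewrite invr_gt0 ltr0n).
have [i iD /= hi] := cov g I.
have iN : (i <= N)%N by apply: leq_bigmax_seq.
have : N.+1%:R^-1 <= (i.+1%:R^-1 : R).
  by rewrite lef_pV2 ?posrE ?ltr0n // ler_nat.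
move=> h; have := lt_trans (le_lt_trans h hi) hg; by rewrite ltxx.
Qed.
End Top.

Section Main.
Variables (R : realType) (d : nat) (G : topologicalZmodType).
Variables (mu : probability (borelType G) R) (rep : G -> 'M[R]_d).
Hypothesis cG : compact [set: G].
Hypothesis Hinv : forall (g : G) (A : set (borelType G)), measurable A ->
         mu ((fun h : G => g + h) @^-1` A) = mu A.
Hypothesis rep0 : rep 0 = 1%:M.
Hypothesis orth : forall g, (rep g)^T *m rep g = 1%:M.
Hypothesis crep : forall i j, continuous (fun g => rep g i j).

Lemma cont_gI (I t : 'cV[R]_d) : continuous (fun g => inner (rep g *m I) t).
Proof.
apply: (@cont_inner R G d (fun g => rep g *m I) (fun _ => t)).
  by move=> i; exact: cont_entry.
by move=> i; exact: cst_continuous.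
Qed.

Lemma keyK (I I' : 'cV[R]_d) : Psi_eq mu rep I I' -> I' != 0 ->
  forall e, 0 < e -> exists g, inner I' I' - e < inner (rep g *m I) I'.
Proof.
move=> HP nz e e0.
set N := inner I' I'.
have Npos : 0 < N.
  rewrite lt_neqAle inner_ge0 andbT; apply/eqP => /esym /inner_eq0 h.
  by rewrite h eqxx in nz.
set c := Num.sqrt N.
have cpos : 0 < c by rewrite sqrtr_gt0.
have cc : c * c = N by rewrite -expr2 sqr_sqrtr // ltW.
have cnz : c != 0 by rewrite gt_eqF.
set t := c^-1 *: I'.
have itx x : inner x t = c^-1 * inner x I' by rewrite innerZr.
have st : sphere t.
  by rewrite /sphere /= itx innerC itx -/N -cc mulKf // mulVf.
have mB : measurable [set x : R | x > c - e / c] by apply: open_measurable; exact: open_gt.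
have := HP t st _ mB.
rewrite /Psi /proj /rho => hE.
set S := [set g : G | c - e / c < inner (rep g *m I) t].
set S' := [set g : G | c - e / c < inner (rep g *m I') t].
have oS' : open S'.
  exact: ((continuousP _).1 (cont_gI I' t) _ (@open_gt _ (c - e / c))).
have S'0 : S' 0.
  rewrite /S' /= rep0 mul1mx itx -/N -cc mulKf // ltrBlDr ltrDl.
  by rewrite divr_gt0.
have := @open_pos R G mu cG Hinv S' oS' S'0.
have -> : mu S' = mu S by exact: (esym hE).
move=> /eqP hS.
case: (pselect (exists g, S g)) => [[g Sg]|hn].
  exists g; move: Sg; rewrite /S /= itx.
  rewrite -(ltr_pM2l cpos) mulrBr mulrCA mulfV // mulr1 cc mulVKf //; exact: id.
exfalso; apply: hS.
have -> : S = set0.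
  by apply/seteqP; split => x // Sx; apply: hn; exists x.
exact: measure0.
Qed.


Lemma Psi_eq_sym (I I' : 'cV[R]_d) : Psi_eq mu rep I I' -> Psi_eq mu rep I' I.
Proof. by move=> H t st B mB; rewrite H. Qed.

Lemma normle (I I' : 'cV[R]_d) : Psi_eq mu rep I I' -> I' != 0 ->
  inner I' I' <= inner I I.
Proof.
move=> HP nz; apply/ler_addgt0Pr => e e0.
have e2 : 0 < e / 2 by rewrite divr_gt0.
have [g hg] := keyK _ _ HP nz _ e2.
have h0 := inner_ge0 (rep g *m I - I').
rewrite innerB (inner_rep _ _ _ (orth g)) in h0.
lra.
Qed.

Lemma main_rev (I I' : 'cV[R]_d) : Psi_eq mu rep I I' -> exists g, rep g *m I = I'.
Proof.
move=> HP; have HP' := Psi_eq_sym _ _ HP.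
have le1 : inner I' I' <= inner I I.
  case: (eqVneq I' 0) => [->|nz]; last exact: normle.
  by rewrite inner0 inner_ge0.
have le2 : inner I I <= inner I' I'.
  case: (eqVneq I 0) => [->|nz]; last exact: normle.
  by rewrite inner0 inner_ge0.
have NN : inner I I = inner I' I' by apply/le_anti; rewrite le1 le2.
case: (eqVneq I' 0) => [E|nz].
  exists 0; rewrite rep0 mul1mx.
  have : inner I I = 0 by rewrite NN E inner0.
  by move/inner_eq0 ->; rewrite E.
pose f := fun g => inner I I + inner I' I' - 2 * inner (rep g *m I) I'.
have cf : continuous f.
  move=> x; apply: (@continuousB _ R^o G (fun _ => inner I I + inner I' I')
     (fun g => 2 * inner (rep g *m I) I')).
    exact: cst_continuous.
  apply: continuousM; [exact: cst_continuous|exact: cont_gI].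
have [g hg] : exists g, f g <= 0.
  apply: (@attain R G cG f cf) => e e0.
  have e2 : 0 < e / 2 by rewrite divr_gt0.
  have [g hg] := keyK _ _ HP nz _ e2.
  by exists g; rewrite /f NN; lra.
exists g.
have h0 := inner_ge0 (rep g *m I - I').
have E0 : inner (rep g *m I - I') (rep g *m I - I') = 0.
  rewrite innerB (inner_rep _ _ _ (orth g)).
  move: hg h0; rewrite /f innerB (inner_rep _ _ _ (orth g)); lra.
by apply/eqP; rewrite -subr_eq0; apply/eqP; exact: inner_eq0.
Qed.
End Main.

Theorem theorem3 (R : realType) (d : nat) (G : topologicalZmodType)
    (mu : probability (borelType G) R) (rep : G -> 'M[R]_d) :
  compact [set: G] -> hausdorff_space G ->
  haar_prob mu -> unitary_rep rep ->
  forall I I' : 'cV[R]_d, orbit_equiv rep I I' <-> Psi_eq mu rep I I'.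
Proof.
move=> cG _ [Hinv _ _] [rep0 hom orth crep] I I'; split; last first.
  exact: (@main_rev R d G mu rep cG Hinv rep0 orth crep I I').
move=> [g0 HI'] t st B mB.
rewrite /Psi /proj /rho.
set S := (fun g : borelType G => rep g *m I) @^-1` ((fun x => inner x t) @^-1` B).
have mS : measurable S.
  exact: (@cont_mble R G _ (@cont_gI R d G rep crep I t) B mB).
transitivity (mu S) => //.
rewrite -(Hinv g0 S mS).
have -> : (fun h : G => g0 + h) @^-1` S =
    (fun g : borelType G => rep g *m I') @^-1` ((fun x => inner x t) @^-1` B).
  apply/funext => g; rewrite /S /preimage /=.
  by rewrite -HI' mulmxA -hom addrC.
by [].
Qed.
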